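(* For each $(\varepsilon,\delta)\in(0,1)\times(0,\delta_0]$, $$\mathcal R^\ast(\varepsilon,\delta|p_{X_1X_2},p_{K_1K_2})\subseteq\mathcal R_{\rm sw}(p_{X_1X_2}).$$
   Context: All logarithms are base 2. $\mathcal X_1,\mathcal X_2$ are finite fields. $(X_1,X_2)$ has joint pmf $p_{X_1X_2}$ on $\mathcal X_1\times\mathcal X_2$ and $(K_1,K_2)$ has joint pmf $p_{K_1K_2}$ on $\mathcal X_1\times\mathcal X_2$. For block length $n$, $(\mathbf X_1,\mathbf X_2)$ is i.i.d. with law $p^n_{X_1X_2}$ (source), $(\mathbf K_1,\mathbf K_2)$ is i.i.d. with law $p^n_{K_1K_2}$ (keys), and the keys are independent of the sources. A distributed source encryption system at block length $n$ consists of finite sets $\mathcal C_i^{(n)}$, encryption maps $\Phi_i^{(n)}:\mathcal X_i^n\times\mathcal X_i^n\to\mathcal C_i^{(n)}$ (key, plaintext) and a decryption map $\Psi^{(n)}:\mathcal X_1^n\times\mathcal X_2^n\times\mathcal C_1^{(n)}\times\mathcal C_2^{(n)}\to\mathcal X_1^n\times\mathcal X_2^n$, such that there exist maps $\phi_i^{(n)}:\mathcal X_i^n\to\mathcal M_i^{(n)}$ (finite $\mathcal M_i^{(n)}$) and $\psi^{(n)}$ with $\Psi^{(n)}(\mathbf k_1,\mathbf k_2,\Phi_1^{(n)}(\mathbf k_1,\mathbf x_1),\Phi_2^{(n)}(\mathbf k_2,\mathbf x_2))=\psi^{(n)}(\phi_1^{(n)}(\mathbf x_1),\phi_2^{(n)}(\mathbf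 x_2))$ for all keys and plaintexts. Ciphertexts: $C_i^{(n)}=\Phi_i^{(n)}(\mathbf K_i,\mathbf X_i)$. Correct decoding set $\mathcal D^{(n)}:=\{(\mathbf x_1,\mathbf x_2):\psi^{(n)}(\phi_1^{(n)}(\mathbf x_1),\phi_2^{(n)}(\mathbf x_2))=(\mathbf x_1,\mathbf x_2)\}$; error probability $p_{\rm e}:=\Pr[(\mathbf X_1,\mathbf X_2)\notin\mathcal D^{(n)}]$. Fix a constant $\delta_0>0$. For $(\varepsilon,\delta)\in(0,1)\times[0,\delta_0]$, $(R_1,R_2)$ is an $(\varepsilon,\delta)$-reliable and secure rate pair if there is a sequence of systems $\{(\Phi_1^{(n)},\Phi_2^{(n)},\Psi^{(n)})\}_{n\ge1}$ such that for every $\gamma>0$ there is $n_0$ with, for all $n\ge n_0$: $\frac1n\log|\mathcal C_i^{(n)}|\le R_i+\gamma$ ($i=1,2$), $p_{\rm e}\le\varepsilon$, and $I(C_1^{(n)}C_2^{(n)};\mathbf X_1\mathbf X_2)\le\delta$. $\mathcal R^\ast(\varepsilon,\delta|p_{X_1X_2},p_{K_1K_2})$ is the set of such pairs. $\mathcal R_{\rm sw}(p_{X_1X_2}):=\{(R_1,R_2):R_1\ge H(X_1|X_2),R_2\ge H(X_2|X_1),R_1+R_2\ge H(X_1X_2)\}$. *)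

(* Defs.v *)
From HB Require Import structures.
From mathcomp Require Import all_boot all_order all_algebra.
From mathcomp Require Import all_classical all_reals exp.
Set Implicit Arguments. Unset Strict Implicit. Unset Printing Implicit Defensive.
Import Order.TTheory GRing.Theory Num.Theory.
Local Open Scope ring_scope.

Section Defs.
Variable R : realType.

Definition log2 (x : R) : R := ln x / ln 2.

Definition is_pmf2 (A B : finType) (p : A -> B -> R) : Prop :=
  (forall a b, 0 <= p a b) /\ \sum_(a : A) \sum_(b : B) p a b = 1.

Definition marg1 (A B : finType) (p : A -> B -> R) (a : A) : R := \sum_(b : B) p a b.
Definition marg2 (A B : finType) (p : A -> B -> R) (b : B) : R := \sum_(a : A) p a b.

Definition joint_entropy (A B : finType) (p : A -> B -> R) : R :=
  - \sum_(a : A) \sum_(b : B) (if p a b == 0 then 0 else p a b * log2 (p a b)).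

Definition cond_entropy12 (A B : finType) (p : A -> B -> R) : R :=
  - \sum_(a : A) \sum_(b : B)
      (if p a b == 0 then 0 else p a b * log2 (p a b / marg2 p b)).

Definition cond_entropy21 (A B : finType) (p : A -> B -> R) : R :=
  - \sum_(a : A) \sum_(b : B)
      (if p a b == 0 then 0 else p a b * log2 (p a b / marg1 p a)).

Definition mutual_info (A B : finType) (P : A -> B -> R) : R :=
  \sum_(a : A) \sum_(b : B)
     (if P a b == 0 then 0 else P a b * log2 (P a b / (marg1 P a * marg2 P b))).

Definition iid (F1 F2 : finType) (p : F1 -> F2 -> R) (n : nat)
  (x1 : n.-tuple F1) (x2 : n.-tuple F2) : R :=
  \prod_(i < n) p (tnth x1 i) (tnth x2 i).

Definition R_sw (F1 F2 : finType) (p : F1 -> F2 -> R) (R1 R2 : R) : Prop :=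
  cond_entropy12 p <= R1 /\ cond_entropy21 p <= R2 /\ joint_entropy p <= R1 + R2.

End Defs.

(* A distributed source encryption system at block length n, together with
   the maps phi_1, phi_2, psi through which decryption factors. *)
Record dsystem (F1 F2 : finFieldType) (n : nat) := DSystem {
  C1 : finType;
  C2 : finType;
  Phi1 : n.-tuple F1 -> n.-tuple F1 -> C1;   (* (key, plaintext) *)
  Phi2 : n.-tuple F2 -> n.-tuple F2 -> C2;
  Psi : n.-tuple F1 -> n.-tuple F2 -> C1 -> C2 -> n.-tuple F1 * n.-tuple F2;
  M1 : finType;
  M2 : finType;
  phi1 : n.-tuple F1 -> M1;
  phi2 : n.-tuple F2 -> M2;
  psi : M1 -> M2 -> n.-tuple F1 * n.-tuple F2;
  factor : forall k1 k2 x1 x2,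
      Psi k1 k2 (Phi1 k1 x1) (Phi2 k2 x2) = psi (phi1 x1) (phi2 x2)
}.

Arguments C1 {F1 F2 n} d.
Arguments C2 {F1 F2 n} d.
Arguments Phi1 {F1 F2 n} d _ _.
Arguments Phi2 {F1 F2 n} d _ _.
Arguments Psi {F1 F2 n} d _ _ _ _.
Arguments M1 {F1 F2 n} d.
Arguments M2 {F1 F2 n} d.
Arguments phi1 {F1 F2 n} d _.
Arguments phi2 {F1 F2 n} d _.
Arguments psi {F1 F2 n} d _ _.

Section Sys.
Variable R : realType.
Variables (F1 F2 : finFieldType) (n : nat).
Variables (pX pK : F1 -> F2 -> R).
Variable S : dsystem F1 F2 n.

Definition decodes (x1 : n.-tuple F1) (x2 : n.-tuple F2) : bool :=
  psi S (phi1 S x1) (phi2 S x2) == (x1, x2).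

Definition err_prob : R :=
  \sum_(x1 : n.-tuple F1) \sum_(x2 : n.-tuple F2)
     (if decodes x1 x2 then 0 else iid pX x1 x2).

Definition joint_CX (c : C1 S * C2 S) (x : n.-tuple F1 * n.-tuple F2) : R :=
  \sum_(k1 : n.-tuple F1) \sum_(k2 : n.-tuple F2)
    (if (Phi1 S k1 x.1 == c.1) && (Phi2 S k2 x.2 == c.2)
     then iid pK k1 k2 * iid pX x.1 x.2 else 0).

Definition leak : R := mutual_info joint_CX.

End Sys.

Definition reliable_secure_rate (R : realType) (F1 F2 : finFieldType)
  (pX pK : F1 -> F2 -> R) (eps delta : R) (R1 R2 : R) : Prop :=
  exists sys : forall n : nat, dsystem F1 F2 n,
    forall gamma : R, 0 < gamma ->
      exists n0 : nat, forall n : nat, (n0 <= n)%N ->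
        log2 (#|C1 (sys n)|%:R) / n%:R <= R1 + gamma /\
        log2 (#|C2 (sys n)|%:R) / n%:R <= R2 + gamma /\
        err_prob pX (sys n) <= eps /\
        leak pX pK (sys n) <= delta.

(* Main.v *)
Require Import Defs.
From HB Require Import structures.
From mathcomp Require Import all_boot all_order all_algebra.
From mathcomp Require Import all_classical all_reals exp.
From mathcomp Require Import sequences ring lra.
Import Order.TTheory GRing.Theory Num.Theory.
Local Open Scope ring_scope.

Section Aux.
Variable R : realType.

Lemma sum_tuple_prod (T : finType) n (f : 'I_n -> T -> R) :
  \sum_(t : n.-tuple T) \prod_(i < n) f i (tnth t i) = \prod_(i < n) \sum_(a : T) f i a.
Proof.
rewrite bigA_distr_bigA /=.
rewrite (reindex (fun g : {ffun 'I_n -> T} => [tuple g i | i < n])) /=.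
  by apply: eq_bigr => g _; apply: eq_bigr => i _; rewrite tnth_mktuple.
exists (fun t : n.-tuple T => [ffun i => tnth t i]) => [g _|t _].
  by apply/ffunP => i; rewrite ffunE tnth_mktuple.
by apply: eq_from_tnth => i; rewrite tnth_mktuple ffunE.
Qed.

Lemma sum2_tuple_prod (T1 T2 : finType) n (g : T1 -> T2 -> R) :
  \sum_(x1 : n.-tuple T1) \sum_(x2 : n.-tuple T2) \prod_(i < n) g (tnth x1 i) (tnth x2 i)
  = (\sum_(a : T1) \sum_(b : T2) g a b) ^+ n.
Proof.
under eq_bigr => x1 _ do rewrite (@sum_tuple_prod _ _ (fun i b => g (tnth x1 i) b)).
rewrite (@sum_tuple_prod _ _ (fun i a => \sum_b g a b)).
by rewrite prodr_const card_ord.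
Qed.

Lemma expR_le2 (t : R) : t <= 0 -> expR t <= 1 + t + t ^+ 2.
Proof.
move=> t0.
rewrite -(ler_pM2r (expR_gt0 (- t))) -expRD subrr expR0.
have h1 : 1 <= (1 + t + t ^+ 2) * (1 - t) by nra.
apply: (le_trans h1); apply: ler_wpM2l; first by nra.
by have := expR_ge1Dx (- t).
Qed.

End Aux.


Section Gen.
Variable R : realType.
Variables (T1 T2 : finType) (p r : T1 -> T2 -> R).
Hypothesis hp0 : forall a b, 0 <= p a b.
Hypothesis hp1 : \sum_a \sum_b p a b = 1.
Hypothesis hr : forall a b, 0 < p a b -> 0 < r a b <= 1.

Definition Hg := - \sum_(a : T1) \sum_(b : T2) (if p a b == 0 then 0 else p a b * log2 (r a b)).
Definition Kg := \sum_(a : T1) \sum_(b : T2) p a b * (ln (r a b)) ^+ 2.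
Definition Gg (lam : R) := \sum_(a : T1) \sum_(b : T2) p a b * expR (lam * ln (r a b)).

Lemma ln2_gt0 : 0 < ln (2 : R).
Proof. by apply: ln_gt0; rewrite ltr1n. Qed.

Lemma Kg_ge0 : 0 <= Kg.
Proof. by apply: sumr_ge0 => a _; apply: sumr_ge0 => b _; rewrite mulr_ge0 ?sqr_ge0. Qed.

Lemma Gg_ge0 lam : 0 <= Gg lam.
Proof. by apply: sumr_ge0 => a _; apply: sumr_ge0 => b _; rewrite mulr_ge0 ?expR_ge0. Qed.

Lemma Gg_bound lam : 0 <= lam -> Gg lam <= 1 - lam * Hg * ln 2 + lam ^+ 2 * Kg.
Proof.
move=> lam0.
have l2 := ln2_gt0.
have -> : 1 - lam * Hg * ln 2 + lam ^+ 2 * Kg =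
   \sum_a \sum_b (p a b + lam * ln 2 * (if p a b == 0 then 0 else p a b * log2 (r a b))
        + lam ^+ 2 * (p a b * (ln (r a b)) ^+ 2)).
  rewrite /Hg /Kg -hp1.
  under [RHS]eq_bigr => a _ do rewrite !big_split /= -!mulr_sumr.
  rewrite !big_split /= -!mulr_sumr; ring.
apply: ler_sum => a _; apply: ler_sum => b _.
have := hp0 a b; rewrite le0r => /orP[/eqP->|pp].
  by rewrite eqxx !(mul0r, mulr0, addr0).
rewrite gt_eqF //.
have /andP[r0 r1] := hr _ _ pp.
have lr : ln (r a b) <= 0 by apply: ln_le0.
have e := @expR_le2 R _ (mulr_ge0_le0 lam0 lr).
have -> : lam * ln 2 * (p a b * log2 (r a b)) = p a b * (lam * ln (r a b)).
  rewrite /log2; field; exact: lt0r_neq0.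
apply: (le_trans (ler_wpM2l (ltW pp) e)).
rewrite le_eqVlt; apply/orP; left; apply/eqP; ring.
Qed.

End Gen.


Section Comb.
Variable R : realType.
Variables (T1 T2 : finType) (p r : T1 -> T2 -> R) (n : nat).
Hypothesis hp0 : forall a b, 0 <= p a b.
Hypothesis hr : forall a b, 0 < p a b -> 0 < r a b <= 1.
Variables (D : n.-tuple T1 -> n.-tuple T2 -> bool) (nu : n.-tuple T1 -> n.-tuple T2 -> R) (Cc : R).
Hypothesis nu0 : forall x1 x2, 0 <= nu x1 x2.
Hypothesis hfac : forall x1 x2,
  iid p x1 x2 = nu x1 x2 * \prod_(i < n) r (tnth x1 i) (tnth x2 i).
Hypothesis hcount : \sum_x1 \sum_x2 (if D x1 x2 then nu x1 x2 else 0) <= Cc.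

Lemma point_bound th lam x1 x2 : 0 < th -> 0 <= lam ->
  iid p x1 x2 <= th * nu x1 x2 + expR (- lam * ln th) *
     \prod_(i < n) (p (tnth x1 i) (tnth x2 i) * expR (lam * ln (r (tnth x1 i) (tnth x2 i)))).
Proof.
move=> th0 lam0.
have Pge0 : 0 <= \prod_(i < n) (p (tnth x1 i) (tnth x2 i) * expR (lam * ln (r (tnth x1 i) (tnth x2 i)))).
  by apply: prodr_ge0 => i _; rewrite mulr_ge0 ?expR_ge0.
have T2ge0 : 0 <= expR (- lam * ln th) *
     \prod_(i < n) (p (tnth x1 i) (tnth x2 i) * expR (lam * ln (r (tnth x1 i) (tnth x2 i)))).
  by rewrite mulr_ge0 ?expR_ge0.
have T1ge0 : 0 <= th * nu x1 x2 by rewrite mulr_ge0 ?nu0 // ltW.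
case: (boolP [forall i, 0 < p (tnth x1 i) (tnth x2 i)]) => [/forallP allp|].
  pose L := \sum_(i < n) ln (r (tnth x1 i) (tnth x2 i)).
  have hR : \prod_(i < n) r (tnth x1 i) (tnth x2 i) = expR L.
    rewrite /L expR_sum; apply: eq_bigr => i _; rewrite lnK // posrE.
    by case/andP: (hr _ _ (allp i)).
  have hP : \prod_(i < n) (p (tnth x1 i) (tnth x2 i) * expR (lam * ln (r (tnth x1 i) (tnth x2 i))))
      = iid p x1 x2 * expR (lam * L).
    by rewrite big_split /= /L mulr_sumr expR_sum.
  case: (lerP L (ln th)) => hL.
    apply: ler_wpDr => //.
    rewrite hfac hR mulrC ler_wpM2r ?nu0 //.
    by rewrite -(lnK th0) ler_expR.
  apply: ler_wpDl => //.
  rewrite hP mulrCA -expRD.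
  rewrite -[X in X <= _]mulr1 ler_wpM2l //.
    by rewrite hfac mulr_ge0 ?nu0 // prodr_ge0 // => i _; case/andP: (hr _ _ (allp i)) => /ltW.
  apply: le_trans (expR_ge1Dx _); rewrite lerDl.
  have : 0 <= L - ln th by rewrite subr_ge0 ltW.
  by move=> h; rewrite mulNr addrC -mulrBr mulr_ge0.
rewrite negb_forall => /existsP[i]; rewrite -leNgt => hi.
have pi0 : p (tnth x1 i) (tnth x2 i) = 0 by apply/eqP; rewrite eq_le hi hp0.
rewrite /iid (bigD1 i) //= pi0 mul0r.
by rewrite addr_ge0.
Qed.

Lemma set_bound th lam : 0 < th -> 0 <= lam ->
  \sum_x1 \sum_x2 (if D x1 x2 then iid p x1 x2 else 0)
  <= th * Cc + expR (- lam * ln th) * (@Gg R _ _ p r lam) ^+ n.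
Proof.
move=> th0 lam0.
rewrite /Gg -sum2_tuple_prod.
apply: (@le_trans _ _ (\sum_x1 \sum_x2 ((if D x1 x2 then th * nu x1 x2 else 0) +
   expR (- lam * ln th) * \prod_(i < n) (p (tnth x1 i) (tnth x2 i) * expR (lam * ln (r (tnth x1 i) (tnth x2 i))))))).
  apply: ler_sum => x1 _; apply: ler_sum => x2 _.
  case: (D x1 x2); first exact: point_bound.
  by rewrite add0r mulr_ge0 ?expR_ge0 // prodr_ge0 // => i _; rewrite mulr_ge0 ?expR_ge0.
under eq_bigr => x1 _ do rewrite big_split /=.
rewrite big_split /=.
apply: lerD.
  apply: (le_trans _ (ler_wpM2l (ltW th0) hcount)).
  rewrite mulr_sumr; apply: ler_sum => x1 _; rewrite mulr_sumr; apply: ler_sum => x2 _.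
  by case: (D x1 x2); rewrite ?mulr0.
by rewrite mulr_sumr; apply: ler_sum => x1 _; rewrite mulr_sumr.
Qed.

End Comb.


Section Conv.
Variable R : realType.

Lemma expN_small (c x : R) : 0 < c -> 0 <= x -> expR (- x * c) * (1 + x * c) <= 1.
Proof.
move=> c0 x0.
rewrite -(ler_pM2r (expR_gt0 (x * c))) mul1r -mulrA (mulrC (1 + _)) mulrA -expRD mulNr addNr expR0 mul1r.
have := expR_ge1Dx (x * c); lra.
Qed.

Lemma req (x y : R) : x = y -> x <= y.
Proof. by move->. Qed.

Lemma small_lt (e c eps : R) : 0 < c -> 0 <= e -> e * (1 + c) <= 1 -> 4 < (1 - eps) * c ->
  e < (1 - eps) / 2.
Proof.
move=> c0 e0 b h.
have p : 0 < 1 + c by lra.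
rewrite -(ltr_pM2r p); apply: (le_lt_trans b).
have -> : (1 - eps) / 2 * (1 + c) = (1 - eps) / 2 + ((1 - eps) * c) / 2 by field.
have : 0 < 1 - eps.
  have : 0 < (1 - eps) * c by lra.
  by rewrite pmulr_lgt0.
lra.
Qed.

Lemma conv (H Rt K eps : R) (Cn S : nat -> R) :
  Rt < H -> 0 <= K -> eps < 1 -> (forall n, 0 < Cn n) ->
  (forall gamma, 0 < gamma -> exists n0, forall n, (n0 <= n)%N ->
      ln (Cn n) <= n%:R * (Rt + gamma) * ln 2 /\ 1 - eps <= S n) ->
  (forall lam, 0 <= lam -> exists G, 0 <= G /\ G <= 1 - lam * H * ln 2 + lam ^+ 2 * K /\
      forall n th, 0 < th -> S n <= th * Cn n + expR (- lam * ln th) * G ^+ n) ->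
  False.
Proof.
move=> RH K0 eps1 Cpos hrate hbd.
have l2 : 0 < ln (2 : R) by apply: ln_gt0; rewrite ltr1n.
pose d := H - Rt.
have d0 : 0 < d by rewrite /d subr_gt0.
have [n0 hn0] := hrate (d / 4) (divr_gt0 d0 (ltr0n _ 4)).
pose a := d / 4 * ln 2.
have a0 : 0 < a by rewrite /a mulr_gt0 // divr_gt0 // ltr0n.
pose lam := a / (2 * (K + 1)).
have lam0 : 0 < lam by rewrite /lam divr_gt0 // mulr_gt0 //; lra.
have lamK : lam * K <= a / 2.
  have e : a / 2 = lam * K + lam by rewrite /lam; field; lra.
  rewrite e; lra.
have [G [G0 [GH hS]]] := hbd lam (ltW lam0).
pose c1 := d / 2 * ln 2.
pose c2 := lam * (a / 2).
have c10 : 0 < c1 by rewrite /c1 mulr_gt0 // divr_gt0 // ltr0n.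
have c20 : 0 < c2 by rewrite /c2 mulr_gt0 // divr_gt0 // ltr0n.
pose A1 := 4 / ((1 - eps) * c1).
pose A2 := 4 / ((1 - eps) * c2).
have e0 : 0 < 1 - eps by lra.
have M1 : 0 <= A1 by rewrite divr_ge0 // ?ler0n // ltW // mulr_gt0.
have M2 : 0 <= A2 by rewrite divr_ge0 // ?ler0n // ltW // mulr_gt0.
have M0 : 0 <= A1 + A2 by rewrite addr_ge0.
pose n := maxn n0 (Num.Def.archi_bound (A1 + A2)).
have [hC hSn] := hn0 n (leq_maxl _ _).
have nM : A1 + A2 < n%:R.
  apply: (lt_le_trans (archi_boundP M0)); rewrite ler_nat; exact: leq_maxr.
have n0' : 0 <= n%:R :> R by rewrite ler0n.
pose th := expR (- n%:R * (H - d / 4) * ln 2).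
have th0 : 0 < th by apply: expR_gt0.
have hSS := hS n th th0.
have t1 : th * Cn n <= expR (- n%:R * c1).
  rewrite -(lnK (Cpos n)) /th -expRD ler_expR.
  apply: (le_trans (_ : _ <= - n%:R * (H - d / 4) * ln 2 + n%:R * (Rt + d / 4) * ln 2)).
    by rewrite lerD2l.
  by apply: req; rewrite /c1 /d; field.
have t2 : expR (- lam * ln th) * G ^+ n <= expR (- n%:R * c2).
  have hG : G ^+ n <= expR (n%:R * (- lam * H * ln 2 + lam ^+ 2 * K)).
    rewrite expRM_natl; apply: lerXn2r; rewrite ?nnegrE ?expR_ge0 //.
    apply: (le_trans GH); apply: le_trans (expR_ge1Dx _); apply: req; ring.
  apply: (le_trans (ler_wpM2l (expR_ge0 _) hG)).
  rewrite /th expRK -expRD ler_expR.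
  have -> : - lam * (- n%:R * (H - d / 4) * ln 2) + n%:R * (- lam * H * ln 2 + lam ^+ 2 * K)
     = (n%:R * lam) * (lam * K - a) by rewrite /a; ring.
  have -> : - n%:R * c2 = (n%:R * lam) * (- (a / 2)) by rewrite /c2; ring.
  apply: ler_wpM2l; first by rewrite mulr_ge0 // ltW.
  clear -lamK; lra.
have b1 := @expN_small c1 n%:R c10 n0'.
have b2 := @expN_small c2 n%:R c20 n0'.
have nc1 : 4 < (1 - eps) * (n%:R * c1).
  have : A1 < n%:R by clear -nM M2; lra.
  rewrite /A1 (ltr_pdivrMr _ _ (mulr_gt0 e0 c10)) => h.
  by apply: (lt_le_trans h); apply: req; ring.
have nc2 : 4 < (1 - eps) * (n%:R * c2).
  have : A2 < n%:R by clear -nM M1; lra.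
  rewrite /A2 (ltr_pdivrMr _ _ (mulr_gt0 e0 c20)) => h.
  by apply: (lt_le_trans h); apply: req; ring.
have npos : 0 < n%:R :> R by apply: le_lt_trans M0 nM.
have f1 := @small_lt _ _ eps (mulr_gt0 npos c10) (expR_ge0 _) b1 nc1.
have f2 := @small_lt _ _ eps (mulr_gt0 npos c20) (expR_ge0 _) b2 nc2.
have h3 : expR (- n%:R * c1) + expR (- n%:R * c2) < 1 - eps.
  by apply: (lt_le_trans (ltrD f1 f2)); apply: req; field.
have := lt_le_trans (le_lt_trans (le_trans hSS (lerD t1 t2)) h3) hSn.
by rewrite ltxx.
Qed.

End Conv.


Section Sys2.
Variable R : realType.
Variables (F1 F2 : finFieldType) (n : nat) (S : dsystem F1 F2 n).
Variables (k1 : n.-tuple F1) (k2 : n.-tuple F2).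

Lemma inj1 x2 : {in [pred x1 | decodes S x1 x2] &, injective (Phi1 S k1)}.
Proof.
move=> x y; rewrite !inE /decodes => /eqP hx /eqP hy e.
have := Defs.factor S k1 k2 x x2; rewrite e Defs.factor hx hy.
by case.
Qed.

Lemma inj2 x1 : {in [pred x2 | decodes S x1 x2] &, injective (Phi2 S k2)}.
Proof.
move=> x y; rewrite !inE /decodes => /eqP hx /eqP hy e.
have := Defs.factor S k1 k2 x1 x; rewrite e Defs.factor hx hy.
by case.
Qed.

Lemma inj12 : {in [pred x : n.-tuple F1 * n.-tuple F2 | decodes S x.1 x.2] &,
   injective (fun x => (Phi1 S k1 x.1, Phi2 S k2 x.2))}.
Proof.
move=> [x1 x2] [y1 y2]; rewrite !inE /decodes /= => /eqP hx /eqP hy [e1 e2].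
have := Defs.factor S k1 k2 x1 x2; rewrite e1 e2 Defs.factor hx hy.
by case=> -> ->.
Qed.

Lemma card1 x2 : (#|[pred x1 | decodes S x1 x2]| <= #|C1 S|)%N.
Proof. by rewrite -(card_in_imset (inj1 x2)) max_card. Qed.

Lemma card2 x1 : (#|[pred x2 | decodes S x1 x2]| <= #|C2 S|)%N.
Proof. by rewrite -(card_in_imset (inj2 x1)) max_card. Qed.

Lemma card12 : (#|[pred x : n.-tuple F1 * n.-tuple F2 | decodes S x.1 x.2]| <= #|C1 S| * #|C2 S|)%N.
Proof. by rewrite -(card_in_imset inj12) -card_prod max_card. Qed.

Lemma count12 :
  \sum_(x1 : n.-tuple F1) \sum_(x2 : n.-tuple F2) (if decodes S x1 x2 then (1 : R) else 0)
  <= (#|C1 S| * #|C2 S|)%:R.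
Proof.
rewrite pair_big -big_mkcond sumr_const ler_nat.
exact: card12.
Qed.

Lemma count_nu1 (nu : n.-tuple F2 -> R) : (forall x2, 0 <= nu x2) -> \sum_x2 nu x2 = 1 ->
  \sum_(x1 : n.-tuple F1) \sum_(x2 : n.-tuple F2) (if decodes S x1 x2 then nu x2 else 0)
  <= #|C1 S|%:R.
Proof.
move=> nu0 nu1.
rewrite exchange_big /=.
apply: (@le_trans _ _ (\sum_x2 nu x2 * #|C1 S|%:R)); last by rewrite -mulr_suml nu1 mul1r.
apply: ler_sum => x2 _.
rewrite -big_mkcond sumr_const -[X in X <= _]mulr_natr ler_wpM2l // ler_nat.
exact: card1.
Qed.

Lemma count_nu2 (nu : n.-tuple F1 -> R) : (forall x1, 0 <= nu x1) -> \sum_x1 nu x1 = 1 ->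
  \sum_(x1 : n.-tuple F1) \sum_(x2 : n.-tuple F2) (if decodes S x1 x2 then nu x1 else 0)
  <= #|C2 S|%:R.
Proof.
move=> nu0 nu1.
apply: (@le_trans _ _ (\sum_x1 nu x1 * #|C2 S|%:R)); last by rewrite -mulr_suml nu1 mul1r.
apply: ler_sum => x1 _.
rewrite -big_mkcond sumr_const -[X in X <= _]mulr_natr ler_wpM2l // ler_nat.
exact: card2.
Qed.

End Sys2.


Section Main.
Variable R : realType.

Lemma case_gen (T1 T2 : finType) (p r : T1 -> T2 -> R) (Rt eps : R) (Cn S : nat -> R) :
  (forall a b, 0 <= p a b) -> \sum_a \sum_b p a b = 1 ->
  (forall a b, 0 < p a b -> 0 < r a b <= 1) ->
  eps < 1 -> (forall n, 0 < Cn n) ->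
  (forall gamma, 0 < gamma -> exists n0, forall n, (n0 <= n)%N ->
      ln (Cn n) <= n%:R * (Rt + gamma) * ln 2 /\ 1 - eps <= S n) ->
  (forall n th lam, 0 < th -> 0 <= lam ->
      S n <= th * Cn n + expR (- lam * ln th) * Gg R T1 T2 p r lam ^+ n) ->
  Hg R T1 T2 p r <= Rt.
Proof.
move=> hp0 hp1 hr eps1 Cpos hrate hS.
rewrite leNgt; apply/negP => HR.
apply: (@conv R _ _ _ _ _ _ HR (@Kg_ge0 R _ _ p r hp0) eps1 Cpos hrate) => lam lam0.
exists (Gg R T1 T2 p r lam); split; first exact: (@Gg_ge0 R _ _ p r hp0).
split; first exact: (@Gg_bound R _ _ p r hp0 hp1 hr).
by move=> n th th0; apply: hS.
Qed.

Lemma rate_conv (x : R) (m : nat) (Rg : R) : (0 < m)%N -> log2 x / m%:R <= Rg ->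
  ln x <= m%:R * Rg * ln 2.
Proof.
move=> m0; have l2 : 0 < ln (2 : R) by apply: ln_gt0; rewrite ltr1n.
rewrite ler_pdivrMr ?ltr0n // /log2 ler_pdivrMr // => h.
by apply: (le_trans h); apply: req; ring.
Qed.

Variables (F1 F2 : finFieldType) (pX : F1 -> F2 -> R).
Hypothesis hp0 : forall a b, 0 <= pX a b.
Hypothesis hp1 : \sum_a \sum_b pX a b = 1.

Lemma le_marg2 a b : pX a b <= marg2 pX b.
Proof. by rewrite /marg2 (bigD1 a) //= lerDl sumr_ge0. Qed.

Lemma le_marg1 a b : pX a b <= marg1 pX a.
Proof. by rewrite /marg1 (bigD1 b) //= lerDl sumr_ge0. Qed.

Lemma sum_marg2 : \sum_b marg2 pX b = 1.
Proof. by rewrite /marg2 exchange_big. Qed.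

Lemma sum_marg1 : \sum_a marg1 pX a = 1.
Proof. by []. Qed.

Lemma nu2_1 n : \sum_(x2 : n.-tuple F2) \prod_(i < n) marg2 pX (tnth x2 i) = 1.
Proof.
rewrite (@sum_tuple_prod R _ n (fun i b => marg2 pX b)) sum_marg2.
by rewrite prodr_const expr1n.
Qed.

Lemma nu1_1 n : \sum_(x1 : n.-tuple F1) \prod_(i < n) marg1 pX (tnth x1 i) = 1.
Proof.
rewrite (@sum_tuple_prod R _ n (fun i a => marg1 pX a)) sum_marg1.
by rewrite prodr_const expr1n.
Qed.

Lemma fact12 n (x1 : n.-tuple F1) (x2 : n.-tuple F2) :
  iid pX x1 x2 = \prod_(i < n) marg2 pX (tnth x2 i) *
    \prod_(i < n) (pX (tnth x1 i) (tnth x2 i) / marg2 pX (tnth x2 i)).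
Proof.
rewrite /iid -big_split /=; apply: eq_bigr => i _.
set a := tnth x1 i; set b := tnth x2 i.
have [m0|m0] := eqVneq (marg2 pX b) 0.
  have h : pX a b <= 0 by rewrite -m0; exact: le_marg2.
  have -> : pX a b = 0 by apply/eqP; rewrite eq_le h hp0.
  by rewrite m0 mul0r.
by rewrite mulrC divfK.
Qed.

Lemma fact21 n (x1 : n.-tuple F1) (x2 : n.-tuple F2) :
  iid pX x1 x2 = \prod_(i < n) marg1 pX (tnth x1 i) *
    \prod_(i < n) (pX (tnth x1 i) (tnth x2 i) / marg1 pX (tnth x1 i)).
Proof.
rewrite /iid -big_split /=; apply: eq_bigr => i _.
set a := tnth x1 i; set b := tnth x2 i.
have [m0|m0] := eqVneq (marg1 pX a) 0.
  have h : pX a b <= 0 by rewrite -m0; exact: le_marg1.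
  have -> : pX a b = 0 by apply/eqP; rewrite eq_le h hp0.
  by rewrite m0 mul0r.
by rewrite mulrC divfK.
Qed.

Lemma marg2_ge0 b : 0 <= marg2 pX b.
Proof. by apply: sumr_ge0. Qed.

Lemma marg1_ge0 a : 0 <= marg1 pX a.
Proof. by apply: sumr_ge0. Qed.

Lemma hr12 a b : 0 < pX a b -> 0 < pX a b / marg2 pX b <= 1.
Proof.
move=> pp; have m : 0 < marg2 pX b := lt_le_trans pp (le_marg2 a b).
by rewrite divr_gt0 //= ler_pdivrMr // mul1r le_marg2.
Qed.

Lemma hr21 a b : 0 < pX a b -> 0 < pX a b / marg1 pX a <= 1.
Proof.
move=> pp; have m : 0 < marg1 pX a := lt_le_trans pp (le_marg1 a b).
by rewrite divr_gt0 //= ler_pdivrMr // mul1r le_marg1.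
Qed.

Lemma hrj a b : 0 < pX a b -> 0 < pX a b <= 1.
Proof.
move=> pp; rewrite pp /=; apply: (le_trans (le_marg2 a b)).
rewrite -sum_marg2 (bigD1 b) //= lerDl; apply: sumr_ge0 => c _; exact: marg2_ge0.
Qed.

Lemma sum_iid n : \sum_(x1 : n.-tuple F1) \sum_(x2 : n.-tuple F2) iid pX x1 x2 = 1.
Proof. by rewrite /iid sum2_tuple_prod hp1 expr1n. Qed.

Lemma succ n (S : dsystem F1 F2 n) : 1 - err_prob pX S =
  \sum_(x1 : n.-tuple F1) \sum_(x2 : n.-tuple F2) (if decodes S x1 x2 then iid pX x1 x2 else 0).
Proof.
rewrite -(sum_iid n) /err_prob.
have -> : \sum_(x1 : n.-tuple F1) \sum_(x2 : n.-tuple F2) iid pX x1 x2 =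
  \sum_(x1 : n.-tuple F1) \sum_(x2 : n.-tuple F2) (if decodes S x1 x2 then iid pX x1 x2 else 0) +
  \sum_(x1 : n.-tuple F1) \sum_(x2 : n.-tuple F2) (if decodes S x1 x2 then 0 else iid pX x1 x2).
  rewrite -big_split; apply: eq_bigr => x1 _; rewrite -big_split; apply: eq_bigr => x2 _.
  by case: (decodes S x1 x2); [exact: (esym (addr0 _)) | exact: (esym (add0r _))].
by rewrite addrK.
Qed.

End Main.


Theorem theorem2 (R : realType) (F1 F2 : finFieldType)
  (pX pK : F1 -> F2 -> R) (delta0 : R) :
  is_pmf2 pX -> is_pmf2 pK -> 0 < delta0 ->
  forall eps delta : R, 0 < eps < 1 -> 0 < delta <= delta0 ->
  forall R1 R2 : R,
    reliable_secure_rate pX pK eps delta R1 R2 -> R_sw pX R1 R2.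
Proof.
move=> [hp0 hp1] _ _ eps delta /andP[eps0 eps1] _ R1 R2 [sys hsys].
pose S := fun n => \sum_(x1 : n.-tuple F1) \sum_(x2 : n.-tuple F2)
   (if decodes (sys n) x1 x2 then iid pX x1 x2 else 0).
have hSn : forall n, err_prob pX (sys n) <= eps -> 1 - eps <= S n.
  by move=> n he; rewrite /S -(@succ R F1 F2 pX hp1) lerD2l lerN2.
pose k1 := fun n => [tuple (0 : F1) | i < n].
pose k2 := fun n => [tuple (0 : F2) | i < n].
have c1pos : forall n, 0 < #|C1 (sys n)|%:R :> R.
  by move=> n; rewrite ltr0n; apply/card_gt0P; exists (Phi1 (sys n) (k1 n) (k1 n)).
have c2pos : forall n, 0 < #|C2 (sys n)|%:R :> R.
  by move=> n; rewrite ltr0n; apply/card_gt0P; exists (Phi2 (sys n) (k2 n) (k2 n)).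
split; last split.
- apply: (@case_gen R F1 F2 pX (fun a b => pX a b / marg2 pX b) R1 eps
      (fun n => #|C1 (sys n)|%:R) S hp0 hp1 (@hr12 R F1 F2 pX hp0) eps1 c1pos).
    move=> g g0; have [n0 h] := hsys g g0; exists (maxn n0 1) => n hn.
    have [hr1 [_ [he _]]] := h n (leq_trans (leq_maxl _ _) hn).
    split; last exact: hSn.
    exact: (@rate_conv R _ _ _ (leq_trans (leq_maxr _ _) hn) hr1).
  move=> n th lam th0 lam0.
  apply: (@set_bound R F1 F2 pX _ n hp0 (@hr12 R F1 F2 pX hp0) (decodes (sys n))
     (fun x1 x2 => \prod_(i < n) marg2 pX (tnth x2 i)) _ _
     (@fact12 R F1 F2 pX hp0 n) _ th lam th0 lam0).
    by move=> x1 x2; apply: prodr_ge0 => i _; apply: (@marg2_ge0 R F1 F2 pX hp0).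
  apply: (@count_nu1 R F1 F2 n (sys n) (k1 n) (k2 n) (fun x2 => \prod_(i < n) marg2 pX (tnth x2 i))).
    by move=> x2; apply: prodr_ge0 => i _; apply: (@marg2_ge0 R F1 F2 pX hp0).
  exact: (@nu2_1 R F1 F2 pX hp1).
- apply: (@case_gen R F1 F2 pX (fun a b => pX a b / marg1 pX a) R2 eps
      (fun n => #|C2 (sys n)|%:R) S hp0 hp1 (@hr21 R F1 F2 pX hp0) eps1 c2pos).
    move=> g g0; have [n0 h] := hsys g g0; exists (maxn n0 1) => n hn.
    have [_ [hr2 [he _]]] := h n (leq_trans (leq_maxl _ _) hn).
    split; last exact: hSn.
    exact: (@rate_conv R _ _ _ (leq_trans (leq_maxr _ _) hn) hr2).
  move=> n th lam th0 lam0.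
  apply: (@set_bound R F1 F2 pX _ n hp0 (@hr21 R F1 F2 pX hp0) (decodes (sys n))
     (fun x1 x2 => \prod_(i < n) marg1 pX (tnth x1 i)) _ _
     (@fact21 R F1 F2 pX hp0 n) _ th lam th0 lam0).
    by move=> x1 x2; apply: prodr_ge0 => i _; apply: (@marg1_ge0 R F1 F2 pX hp0).
  apply: (@count_nu2 R F1 F2 n (sys n) (k1 n) (k2 n) (fun x1 => \prod_(i < n) marg1 pX (tnth x1 i))).
    by move=> x1; apply: prodr_ge0 => i _; apply: (@marg1_ge0 R F1 F2 pX hp0).
  exact: (@nu1_1 R F1 F2 pX hp1).
- have cpos : forall n, 0 < (#|C1 (sys n)| * #|C2 (sys n)|)%:R :> R.
    by move=> n; rewrite natrM mulr_gt0.
  apply: (@case_gen R F1 F2 pX pX (R1 + R2) eps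
      (fun n => (#|C1 (sys n)| * #|C2 (sys n)|)%:R) S hp0 hp1 (@hrj R F1 F2 pX hp0 hp1) eps1 cpos).
    move=> g g0; have g2 : 0 < g / 2 by rewrite divr_gt0 // ltr0n.
    have [n0 h] := hsys (g / 2) g2; exists (maxn n0 1) => n hn.
    have [hr1 [hr2 [he _]]] := h n (leq_trans (leq_maxl _ _) hn).
    split; last exact: hSn.
    have m0 := leq_trans (leq_maxr _ _) hn.
    have a1 := @rate_conv R _ _ _ m0 hr1.
    have a2 := @rate_conv R _ _ _ m0 hr2.
    have cp1 : (#|C1 (sys n)|%:R : R) \in Num.pos by rewrite posrE.
    have cp2 : (#|C2 (sys n)|%:R : R) \in Num.pos by rewrite posrE.
    rewrite natrM (lnM cp1 cp2).
    apply: (le_trans (lerD a1 a2)); apply: (@req R); field.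
    done.
  move=> n th lam th0 lam0.
  apply: (@set_bound R F1 F2 pX _ n hp0 (@hrj R F1 F2 pX hp0 hp1) (decodes (sys n))
     (fun x1 x2 => 1) _ _ _ _ th lam th0 lam0).
  + by move=> x1 x2; apply: ler01.
  + by move=> x1 x2; rewrite mul1r.
  exact: (@count12 R F1 F2 n (sys n) (k1 n) (k2 n)).
Qed.
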